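(* If $6$ divides $n$, then $IK_n$ is not a $G$-graph.
   Context: $K_n$ is the complete simple graph on $n$ vertices and $IK_n$ its incidence graph (the simple graph whose vertices are the vertices and edges of $K_n$, each edge adjacent exactly to its two end-points). For a group $G$ and a multiset $S$ of elements of $G$, $\Phi(G,S)$ is the multigraph whose vertex set is the union over the members $s$ of $S$ (with multiplicity) of the right cosets $\langle s\rangle x$, $x\in G$, with one edge labeled $g$ between $\langle s\rangle x$ and $\langle t\rangle y$ ($s,t$ distinct members of $S$) for each $g\in\langle s\rangle x\cap\langle t\rangle y$, and no other edges; a $G$-graph is a multigraph isomorphic (ignoring labels) to some $\Phi(G,S)$. *)

(* Defs.v *)
From mathcomp Require Import all_boot all_fingroup.
Set Implicit Arguments. Unset Strict Implicit. Unset Printing Implicit Defensive.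

(* A finite loopless multigraph is given by a vertex finType V and an edge
   multiplicity function m : V -> V -> nat (m u v = number of edges between
   u and v). *)
Definition mg_iso (V W : finType) (a : V -> V -> nat) (b : W -> W -> nat) : Prop :=
  exists f : V -> W, bijective f /\ forall u v, b (f u) (f v) = a u v.

(* Incidence graph IK_n of the complete graph K_n: vertices are the vertices
   ('I_n) and the edges (2-subsets of 'I_n) of K_n; an edge-vertex is adjacent
   (by exactly one edge) to its two end-points. *)
Definition IK_vert (n : nat) : finType :=
  ('I_n + {e : {set 'I_n} | #|e| == 2})%type.

Definition IK_mult (n : nat) (u v : IK_vert n) : nat :=
  match u, v with
  | inl x, inr e => (x \in sval e : nat)
  | inr e, inl x => (x \in sval e : nat)
  | _, _ => 0
  end.

(* Phi(G,S): S is a multiset of elements of G, represented as a sequence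
   (members indexed by 'I_(size S)). *)
Definition Phi_vert (gT : finGroupType) (G : {group gT}) (S : seq gT) : finType :=
  {x : 'I_(size S) * {set gT} | x.2 \in rcosets <[nth 1%g S x.1]> G}.

Definition Phi_mult (gT : finGroupType) (G : {group gT}) (S : seq gT)
    (u v : Phi_vert G S) : nat :=
  if (sval u).1 != (sval v).1 then #|(sval u).2 :&: (sval v).2| else 0.

(* Main.v *)
Require Import Defs.
From mathcomp Require Import all_boot all_fingroup.
From mathcomp Require Import pgroup sylow cyclic.
From mathcomp Require Import zify.
Set Implicit Arguments. Unset Strict Implicit. Unset Printing Implicit Defensive.
Import GroupScope.

Lemma card_rcosetI (gT : finGroupType) (X Y : {set gT}) g :
  #|(X :* g) :&: (Y :* g)| = #|X :&: Y|.
Proof.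
rewrite -!rcosetE /rcoset -imsetI; last by move=> a b _ _; apply: mulIg.
by rewrite card_imset //; apply: mulIg.
Qed.

Lemma IK_le1 n (u v : IK_vert n) : IK_mult u v <= 1.
Proof. by case: u => [x|e]; case: v => [y|e'] //=; case: (_ \in _). Qed.

Definition side n (u : IK_vert n) : bool := if u is inl _ then true else false.

Lemma IK_side n (u v : IK_vert n) : 0 < IK_mult u v -> side u != side v.
Proof. by case: u => [x|e]; case: v => [y|e']. Qed.

Lemma Phi_pos (gT : finGroupType) (G : {group gT}) (S : seq gT) (u v : Phi_vert G S) :
  0 < Phi_mult u v -> (sval u).1 != (sval v).1.
Proof. by rewrite /Phi_mult; case: ifP. Qed.

Lemma Phi_eq (gT : finGroupType) (G : {group gT}) (S : seq gT) (u v : Phi_vert G S) :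
  (sval u).1 != (sval v).1 -> Phi_mult u v = #|(sval u).2 :&: (sval v).2|.
Proof. by rewrite /Phi_mult => ->. Qed.

Lemma two_idx k (hk : k = 2) (i j l : 'I_k) : i != j -> j != l -> i = l.
Proof.
move=> hij hjl; apply/val_inj; move: hij hjl; rewrite -!(inj_eq val_inj) /=.
have := ltn_ord i; have := ltn_ord j; have := ltn_ord l.
move: (val i) (val j) (val l) => a b c; rewrite hk; clear; lia.
Qed.
Lemma group_contra (gT : finGroupType) (G A : {group gT}) (n : nat) :
  A \subset G -> #|rcosets A G| = n -> 2 %| n -> 3 %| n ->
  (forall g C1 C2, g \in G -> C1 \in rcosets A G -> C2 \in rcosets A G ->
     C1 != C2 -> C1 :* g = C1 -> C2 :* g = C2 -> g = 1) ->
  (forall C1 C2, C1 \in rcosets A G -> C2 \in rcosets A G -> C1 != C2 ->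
     exists2 g, g \in G & (g * g = 1) /\ C1 :* g = C2) ->
  False.
Proof.
move=> sAG cardOm h2 h3 F1 F2.
set Om := rcosets A G in cardOm F1 F2.
have AOm : (A : {set gT}) \in Om by apply/rcosetsP; exists 1; rewrite ?group1 ?rcoset1.
have fixP g C : reflect (C \in Om /\ C :* g = C) (C \in 'Fix_(Om | 'Rs)[g]).
  rewrite inE; apply: (iffP andP) => [[-> /afix1P /=]|[-> H]]; rewrite ?rcosetE //.
  by split => //; apply/afix1P => /=; rewrite rcosetE.
have fix1 g : g \in G -> g != 1 -> #|'Fix_(Om | 'Rs)[g]| <= 1.
  move=> Gg ng1; rewrite leqNgt; apply/negP => /card_gt1P [C1 [C2 [/fixP [O1 f1] /fixP [O2 f2] ne]]].
  by move/eqP: ng1; apply; exact: (F1 g C1 C2).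
have fixp g p : prime p -> p %| n -> g \in G -> #[g] = p -> 'Fix_(Om | 'Rs)[g] = set0.
  move=> pp pn Gg og.
  have ng1 : g != 1 by rewrite -order_eq1 og; case: p pp {pn og} => [|[|]].
  have := pgroup_fix_mod (to := 'Rs) (p := p) (G := <[g]>%G) (S := Om).
  rewrite /pgroup -orderE og pnat_id // => /(_ isT).
  have acts : [acts <[g]>, on Om | 'Rs].
    apply: subset_trans (actsRs_rcosets A G); by rewrite cycle_subG.
  move/(_ acts); rewrite /= afix_cycle cardOm => H.
  apply/eqP; rewrite -cards_eq0.
  have := fix1 g Gg ng1; case E: #|_| => [//|[|//]] _.
  move: H; rewrite E; move/dvdnP: pn => [k ->]; rewrite modnMl modn_small ?prime_gt1 //.
have orbOne : #|orbit 'Rs G @: Om| = 1%N.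
  have -> : orbit 'Rs G @: Om = [set Om]; last by rewrite cards1.
  apply/setP => X; rewrite inE; apply/imsetP/eqP => [[C HC ->]|->].
    exact: atransP (transRs_rcosets A G) C HC.
  by exists (A : {set gT}) => //; rewrite (atransP (transRs_rcosets A G)).
have FC := Frobenius_Cauchy (actsRs_rcosets A G); rewrite orbOne mul1n in FC.
have h3G : 3 %| #|G| by rewrite -(Lagrange sAG) -/(#|G : A|) /indexg cardOm dvdn_mull.
have [t Gt ot] := Cauchy (p := 3) isT h3G.
set J := [set g in G | (g * g == 1) && (g != 1)].
set T := t |: J.
have tJ : t \notin J.
  rewrite inE; apply/negP => /andP [_ /andP [/eqP tt _]].
  have : #[t] %| 2 by rewrite order_dvdn expgS expg1 tt.
  by rewrite ot.
have cardJ : (n - 1 <= #|J|)%N.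
  have sub : Om :\ (A : {set gT}) \subset (fun g => (A : {set gT}) :* g) @: J.
    apply/subsetP => C /setD1P [ne OC].
    have [g Gg [gg eq]] := F2 A C AOm OC (ltac:(by rewrite eq_sym)).
    apply/imsetP; exists g => //; rewrite inE Gg gg eqxx /=.
    apply/negP => /eqP g1; move: eq; rewrite g1 rcoset1 => eqC.
    by rewrite eqC eqxx in ne.
  have k := leq_trans (subset_leq_card sub) (leq_imset_card _ _).
  move: k; have := cardsD1 (A : {set gT}) Om; rewrite AOm add1n cardOm => ->.
  by rewrite subn1.
have cardT : n <= #|T| by rewrite cardsU1 tJ; lia.
have fixT a : a \in T -> 'Fix_(Om | 'Rs)[a] = set0.
  rewrite !inE => /orP [/eqP -> | ]; first exact: (fixp t 3).
  move=> HJ; move: HJ.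
  move=> /andP [Ga /andP [/eqP aa a1]].
  apply: (fixp a 2) => //.
  have d : #[a] %| 2 by rewrite order_dvdn expgS expg1 aa.
  have := dvdn_leq (isT : 0 < 2)%N d; have := order_gt0 a.
  move: a1; rewrite -order_eq1 => /eqP; case: #[a] => [|[|[|]]] //.
have TG : T \subset G :\ 1.
  apply/subsetP => a; rewrite !inE => /orP [/eqP -> | /andP [Ga /andP [_ ->]]].
    by rewrite Gt -order_eq1 ot.
  by rewrite Ga.
have Fix1 : 'Fix_(Om | 'Rs)[1] = Om.
  by apply/setIidPl; apply/subsetP => C _; apply/afix1P; rewrite /= rcosetE rcoset1.
rewrite (bigD1 1) ?group1 //= Fix1 cardOm in FC.
have E1 : \sum_(i in G | i != 1) #|'Fix_(Om | 'Rs)[i]| = \sum_(i in G :\ 1) #|'Fix_(Om | 'Rs)[i]|.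
  by apply: eq_bigl => i; rewrite !inE andbC.
rewrite E1 (big_setID T) (setIidPr TG) big1 in FC; last by move=> a /fixT ->; rewrite cards0.
have FC' : n + \sum_(i in (G :\ 1) :\: T) #|'Fix_(Om | 'Rs)[i]| = #|G| by rewrite -FC.
have Hs : \sum_(i in (G :\ 1) :\: T) #|'Fix_(Om | 'Rs)[i]| <= #|G :\ 1| - #|T|.
  rewrite -cardsDS // -sum1_card; apply: leq_sum => a; rewrite !inE => /andP [_ /andP [a1 Ga]]; exact: fix1.
have k1 := subset_leq_card TG.
have k2 := cardsD1 1 G; rewrite group1 add1n in k2.
move: (\sum_(i in (G :\ 1) :\: T) #|'Fix_(Om | 'Rs)[i]|) FC' Hs => s FC' Hs.
rewrite k2 in FC'. move: cardT; rewrite -/T => cardT. move: k1 Hs FC' cardT. move: (#|G^#|) (#|T|) => x y. clear. lia.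
Qed.

Theorem corollary4 (n : nat) (n_gt0 : 0 < n) (h6 : 6 %| n)
    (gT : finGroupType) (G : {group gT}) (S : seq gT) (SG : {subset S <= G}) :
  ~ mg_iso (@IK_mult n) (@Phi_mult gT G S).
Proof.
move=> [f [bij eqm]]; case: (bij) => finv fK Kf.
have n6 : 6 <= n by apply: dvdn_leq.
pose x0 : 'I_n := Ordinal n_gt0.
have n1 : 1 < n by lia.
pose x1 : 'I_n := Ordinal n1.
have x01 : x0 != x1 by [].
have em2 (a b : 'I_n) : a != b -> #|[set a; b]| == 2 by move=> ab; rewrite cards2 ab.
have multe (a b c : 'I_n) (ab : a != b) : c \in [set a; b] -> IK_mult (inl c) (inr (exist _ [set a; b] (em2 a b ab))) = 1%N.
  by rewrite /IK_mult /= => ->.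
have mimp (u v : IK_vert n) : 0 < IK_mult u v -> 0 < Phi_mult (f u) (f v) by rewrite eqm.
have sG (i : 'I_(size S)) : <[nth 1 S i]> \subset G by rewrite cycle_subG; apply: SG; apply: mem_nth.
have hw (i : 'I_(size S)) : (<[nth 1 S i]> : {set gT}) \in rcosets <[nth 1 S i]> G.
  by apply/rcosetsP; exists 1; rewrite ?group1 ?rcoset1.
have k2 : size S = 2.
  have kpos : 0 < size S.
    by move: ((sval (f (inl x0))).1) => i; exact: leq_ltn_trans (leq0n _) (ltn_ord i).
  pose e01 : IK_vert n := inr (exist _ [set x0; x1] (em2 _ _ x01)).
  have ne : (sval (f (inl x0))).1 != (sval (f e01)).1.
    by apply: Phi_pos; apply: mimp; rewrite multe ?set21.
  have k1 : size S != 1%N.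
    apply/negP => /eqP k1; move/eqP: ne; apply; apply/val_inj.
    move: ((sval (f (inl x0))).1) ((sval (f e01)).1) => i j.
    case: i => a Ha; case: j => b Hb /=; move: Ha Hb; rewrite k1; clear; lia.
  case: (ltnP 2 (size S)) => k3; last by lia.
  pose i0 : 'I_(size S) := Ordinal kpos.
  have k1' : 1 < size S by lia.
  pose i1 : 'I_(size S) := Ordinal k1'.
  pose i2 : 'I_(size S) := Ordinal k3.
  pose w (i : 'I_(size S)) : Phi_vert G S := exist _ (i, <[nth 1 S i]> : {set gT}) (hw i).
  have pw (i j : 'I_(size S)) : i != j -> side (finv (w i)) != side (finv (w j)).
    move=> ij; apply: IK_side; rewrite -eqm !Kf Phi_eq //=.
  have := pw i0 i1 isT; have := pw i1 i2 isT; have := pw i0 i2 isT.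
  by move: (side _) (side _) (side _) => [] [] [].
pose p := (sval (f (inl x0))).1.
pose A := [group of <[nth 1 S p]>].
have idxA x : (sval (f (inl x))).1 = p.
  case: (eqVneq x x0) => [-> //|nx].
  have nx' : x0 != x by rewrite eq_sym.
  pose ee : IK_vert n := inr (exist _ [set x0; x] (em2 _ _ nx')).
  have h1 : (sval (f (inl x0))).1 != (sval (f ee)).1.
    by apply: Phi_pos; apply: mimp; rewrite multe ?set21.
  have h2 : (sval (f ee)).1 != (sval (f (inl x))).1.
    by apply: Phi_pos; rewrite eqm /IK_mult /= set22.
  by apply/esym; have := two_idx k2 h1 h2.
have idxE e : (sval (f (inr e))).1 != p.
  case: e => E HE; have : 0 < #|E| by rewrite (eqP HE).
  case/card_gt0P => x xE.
  by rewrite -(idxA x) eq_sym; apply: Phi_pos; rewrite eqm /= xE.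
have ptV (w : Phi_vert G S) : (sval w).1 = p -> exists x, w = f (inl x).
  move=> hw0; case E: (finv w) => [x|e]; first by exists x; rewrite -E Kf.
  by move: (idxE e); rewrite -E Kf hw0 eqxx.
have edV (w : Phi_vert G S) : (sval w).1 != p -> exists e, w = f (inr e).
  move=> hw0; case E: (finv w) => [x|e]; last by exists e; rewrite -E Kf.
  by move: hw0; rewrite -(idxA x) -E Kf eqxx.
have cardOm : #|rcosets A G| = n.
  pose phi (x : 'I_n) := (sval (f (inl x))).2.
  have phi_inj : injective phi.
    move=> x y h; suff : f (inl x) = f (inl y) by move/(bij_inj bij) => [].
    apply/val_inj => /=.
    by rewrite [sval (f (inl x))]surjective_pairing [sval (f (inl y))]surjective_pairing !idxA -/(phi x) -/(phi y) h.
  have -> : rcosets A G = [set phi x | x : 'I_n].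
    apply/setP => C; apply/idP/imsetP => [OC | [x _ ->]].
      have [x E] := ptV (exist _ (p, C) OC) erefl.
      by exists x => //; rewrite /phi -E.
    by have := svalP (f (inl x)); rewrite idxA.
  by rewrite card_imset // card_ord.
have setup C1 C2 : C1 \in rcosets A G -> C2 \in rcosets A G -> C1 != C2 ->
  exists wD : Phi_vert G S, [/\ (sval wD).1 != p, #|C1 :&: (sval wD).2| = 1%N,
     #|C2 :&: (sval wD).2| = 1%N,
     (forall w', (sval w').1 != p -> 0 < #|C1 :&: (sval w').2| ->
        0 < #|C2 :&: (sval w').2| -> w' = wD)
   & (forall C, C \in rcosets A G -> 0 < #|C :&: (sval wD).2| -> C = C1 \/ C = C2)].
  move=> O1 O2 ne.
  have [y1 E1] := ptV (exist _ (p, C1) O1) erefl.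
  have [y2 E2] := ptV (exist _ (p, C2) O2) erefl.
  have y12 : y1 != y2.
    apply/eqP => e12; move/eqP: ne; apply.
    move: (congr1 (fun w => (sval w).2) E1) (congr1 (fun w => (sval w).2) E2) => /= -> ->.
    by rewrite e12.
  pose ee := exist (fun e : {set 'I_n} => #|e| == 2) [set y1; y2] (em2 _ _ y12).
  exists (f (inr ee)); split.
  - exact: idxE.
  - have := eqm (inl y1) (inr ee); rewrite -E1 Phi_eq /=; last by rewrite eq_sym idxE.
    by move=> ->; rewrite set21.
  - have := eqm (inl y2) (inr ee); rewrite -E2 Phi_eq /=; last by rewrite eq_sym idxE.
    by move=> ->; rewrite set22.
  - move=> w' hw' p1 p2; have [e' Ew] := edV w' hw'; subst w'.
    have m1 : 0 < IK_mult (inl y1) (inr e').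
      by rewrite -eqm -E1 Phi_eq /=; [exact: p1 | rewrite eq_sym idxE].
    have m2 : 0 < IK_mult (inl y2) (inr e').
      by rewrite -eqm -E2 Phi_eq /=; [exact: p2 | rewrite eq_sym idxE].
    congr (f (inr _)); apply/val_inj => /=; apply/esym/eqP.
    rewrite eqEcard (eqP (svalP e')) cards2 y12 andbT.
    have i1 : y1 \in sval e' by move: m1; rewrite /IK_mult; case: (_ \in _).
    have i2 : y2 \in sval e' by move: m2; rewrite /IK_mult; case: (_ \in _).
    by apply/subsetP => y; rewrite !inE => /orP [/eqP -> | /eqP ->].
  - move=> C OC pC.
    have [x E] := ptV (exist _ (p, C) OC) erefl.
    have m : 0 < IK_mult (inl x) (inr ee).
      by rewrite -eqm -E Phi_eq /=; [exact: pC | rewrite eq_sym idxE].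
    move: m; rewrite /IK_mult /= !inE.
    case: (eqVneq x y1) => [ex|_]; first by left; move: (congr1 (fun w => (sval w).2) E); rewrite /= => ->; rewrite ex -E1.
    case: (eqVneq x y2) => [ex|_] //; first by right; move: (congr1 (fun w => (sval w).2) E); rewrite /= => ->; rewrite ex -E2.
have Om_sub C : C \in rcosets A G -> C = A :* repr C /\ forall c, c \in C -> C = A :* c.
  case/rcosetsP => c Gc ->; split; first by rewrite rcoset_repr.
  by move=> c' /rcoset_eqP ->.
apply: (group_contra (G := G) (A := A) (n := n)) cardOm _ _ _ _.
- exact: sG.
- exact: dvdn_trans (isT : 2 %| 6) h6.
- exact: dvdn_trans (isT : 3 %| 6) h6.
- move=> g C1 C2 Gg O1 O2 ne f1 f2.
  have [wD [hq h1 h2 uniq _]] := setup C1 C2 O1 O2 ne.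
  have HD := svalP wD.
  have HDg : (sval wD).2 :* g \in rcosets <[nth 1 S (sval wD).1]> G.
    case/rcosetsP: HD => d Gd ->; apply/rcosetsP; exists (d * g); first by rewrite groupM.
    by rewrite rcosetM.
  pose wD' := exist (fun x : 'I_(size S) * {set gT} => x.2 \in rcosets <[nth 1 S x.1]> G) ((sval wD).1, (sval wD).2 :* g) HDg : Phi_vert G S.
  have Dg : (sval wD).2 :* g = (sval wD).2.
    have := uniq wD' hq; rewrite /= -{1}f1 -{1}f2 !card_rcosetI h1.
    have : 0 < #|C2 :&: (sval wD).2| by rewrite h2.
    by move=> -> /(_ isT isT) /(congr1 (fun w => (sval w).2)).
  have /cards1P [d1 hd1] : #|C1 :&: (sval wD).2| == 1%N by rewrite h1.
  have : d1 \in C1 :&: (sval wD).2 by rewrite hd1 set11.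
  rewrite inE => /andP [d1C d1D].
  have : d1 * g \in C1 :&: (sval wD).2.
    rewrite inE -{1}f1 -{1}Dg; apply/andP; split; apply/rcosetP; exists d1 => //.
  by rewrite hd1 inE -{2}[d1]mulg1 => /eqP /mulgI.
- move=> C1 C2 O1 O2 ne.
  have [wD [hq h1 h2 _ cov]] := setup C1 C2 O1 O2 ne.
  set D := (sval wD).2 in h1 h2 cov.
  set B := <[nth 1 S (sval wD).1]>.
  have HD : D \in rcosets B G := svalP wD.
  have sBG : B \subset G := sG _.
  have /cards1P [d1 hd1] : #|C1 :&: D| == 1%N by rewrite h1.
  have /cards1P [d2 hd2] : #|C2 :&: D| == 1%N by rewrite h2.
  have : d1 \in C1 :&: D by rewrite hd1 set11.
  rewrite inE => /andP [d1C d1D].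
  have : d2 \in C2 :&: D by rewrite hd2 set11.
  rewrite inE => /andP [d2C d2D].
  have [C1e _] := Om_sub C1 O1; have [_ C1d] := Om_sub C1 O1.
  have [_ C2d] := Om_sub C2 O2.
  have DG : D \subset G.
    case/rcosetsP: HD => d Gd ->; apply/subsetP => h /rcosetP [b Bb ->].
    by rewrite groupM // (subsetP sBG).
  have Dd1 : D = B :* d1.
    by case/rcosetsP: HD => d Gd Dd; rewrite Dd in d1D *; apply/esym/rcoset_eqP.
  have inD h : h \in D -> h = d1 \/ h = d2.
    move=> hD.
    have OC : A :* h \in rcosets A G by apply/rcosetsP; exists h => //; exact: (subsetP DG).
    have pC : 0 < #|A :* h :&: D| by apply/card_gt0P; exists h; rewrite inE rcoset_refl hD.
    case: (cov _ OC pC) => eC.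
      by left; apply/set1P; rewrite -hd1 -eC inE rcoset_refl hD.
    by right; apply/set1P; rewrite -hd2 -eC inE rcoset_refl hD.
  have d12 : d1 != d2.
    by apply/eqP => e; move/eqP: ne; apply; rewrite (C1d d1 d1C) (C2d d2 d2C) e.
  have Gd1 := subsetP DG _ d1D; have Gd2 := subsetP DG _ d2D.
  exists (d1^-1 * d2); first by rewrite groupM ?groupV.
  split; last by rewrite (C1d d1 d1C) (C2d d2 d2C) -rcosetM mulKVg.
  have bB : d2 * d1^-1 \in B by rewrite -mem_rcoset -Dd1.
  have hD : d2 * d1^-1 * d2 \in D.
    rewrite Dd1 mem_rcoset.
    have -> : d2 * d1^-1 * d2 * d1^-1 = (d2 * d1^-1) * (d2 * d1^-1) by rewrite !mulgA.
    by rewrite groupM.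
  have -> : d1^-1 * d2 * (d1^-1 * d2) = d1^-1 * (d2 * d1^-1 * d2) by rewrite !mulgA.
  case: (inD _ hD) => e; first by rewrite e mulVg.
  have e1 : d2 * d1^-1 = 1 by apply: (mulIg d2); rewrite mul1g.
  by move/eqP: e1; rewrite -eq_mulgV1 eq_sym (negbTE d12).
Qed.
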